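(* Let $V$ be a JB-algebra and let $a,b$ be projections in $V$ with $\{aba\}=\lambda a$ and $\{bab\}=\mu b$ for some real numbers $\lambda,\mu$. Then $0\le\lambda=\mu\le1$. Moreover $\lambda=0$ if and only if $ab=0$, and $\lambda=1$ if and only if $a=b$.
   Context: Products are the Jordan product of $V$. A projection is an idempotent. The triple product is $\{xyz\}=(xy)z-(zx)y+(yz)x$, so that $\{aba\}=2a(ab)-a^2b$. *)

(* Defs.v *)
From HB Require Import structures.
From mathcomp Require Import all_boot all_order all_algebra.
From mathcomp Require Import all_classical all_reals all_analysis.
Set Implicit Arguments. Unset Strict Implicit. Unset Printing Implicit Defensive.
Import Order.TTheory GRing.Theory Num.Theory.
Import numFieldNormedType.Exports.
Local Open Scope ring_scope.

Definition is_JB_algebra (R : realType) (V : completeNormedModType R)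
    (mul : V -> V -> V) : Prop :=
  (* bilinearity (left linearity + commutativity gives bilinearity) *)
  (forall (c : R) (x y z : V), mul (c *: x + y) z = c *: mul x z + mul y z) /\
  (forall x y : V, mul x y = mul y x) /\
  (forall x y : V, mul (mul x y) (mul x x) = mul x (mul y (mul x x))) /\
  (forall x y : V, `|mul x y| <= `|x| * `|y|) /\
  (forall x : V, `|mul x x| = `|x| ^+ 2) /\
  (forall x y : V, `|mul x x| <= `|mul x x + mul y y|).

Definition triple (R : realType) (V : completeNormedModType R)
    (mul : V -> V -> V) (x y z : V) : V :=
  mul (mul x y) z - mul (mul z x) y + mul (mul y z) x.

Definition is_projection (R : realType) (V : completeNormedModType R)
    (mul : V -> V -> V) (p : V) : Prop := mul p p = p.

(* Main.v *)
Require Import Defs.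
From HB Require Import structures.
From mathcomp Require Import all_boot all_order all_algebra.
From mathcomp Require Import all_classical all_reals all_analysis.
From mathcomp Require Import ring lra.
Import Order.TTheory GRing.Theory Num.Theory.
Import numFieldNormedType.Exports.
Local Open Scope ring_scope.
Set Implicit Arguments. Unset Strict Implicit.

Definition lc4 (R : realType) (V : lmodType R) (a b p q : V) (x y z w : R) : V :=
  x *: a + y *: b + z *: p + w *: q.
Arguments lc4 {R V}.

Lemma lc4D (R : realType) (V : lmodType R) (a b p q : V) (x y z w x' y' z' w' : R) :
  lc4 a b p q x y z w + lc4 a b p q x' y' z' w' =
  lc4 a b p q (x + x') (y + y') (z + z') (w + w').
Proof.
rewrite /lc4 !scalerDl addrACA; congr (_ + _).
rewrite addrACA; congr (_ + _). by rewrite addrACA.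
Qed.

Lemma lc4Z (R : realType) (V : lmodType R) (a b p q : V) (r x y z w : R) :
  r *: lc4 a b p q x y z w = lc4 a b p q (r * x) (r * y) (r * z) (r * w).
Proof. by rewrite /lc4 !scalerDr !scalerA. Qed.

Lemma lc4N (R : realType) (V : lmodType R) (a b p q : V) (x y z w : R) :
  - lc4 a b p q x y z w = lc4 a b p q (- x) (- y) (- z) (- w).
Proof. by rewrite -scaleN1r lc4Z !mulN1r. Qed.

Lemma lc4_solve (R : realType) (V : lmodType R) (a b p q : V)
  (x1 x2 x3 x4 y1 y2 y3 y4 g1 g2 g3 g4 h1 h2 h3 h4 k : R) :
  lc4 a b p q x1 x2 x3 x4 = lc4 a b p q y1 y2 y3 y4 ->
  g1 - h1 = k * (x1 - y1) -> g2 - h2 = k * (x2 - y2) ->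
  g3 - h3 = k * (x3 - y3) -> g4 - h4 = k * (x4 - y4) ->
  lc4 a b p q g1 g2 g3 g4 = lc4 a b p q h1 h2 h3 h4.
Proof.
move=> E e1 e2 e3 e4; apply/eqP; rewrite -subr_eq0.
rewrite lc4N lc4D e1 e2 e3 e4 -!lc4Z -lc4D -lc4N E subrr.
by rewrite ?scaler0.
Qed.


Lemma jmul0l (R : realType) (V : completeNormedModType R) (mul : V -> V -> V)
  (hJB : is_JB_algebra mul) z : mul 0 z = 0.
Proof.
have [hL _] := hJB.
have := hL 1 0 0 z; rewrite !scale1r addr0 => H.
by apply: (@addrI _ (mul 0 z)); rewrite addr0 -H.
Qed.

Lemma jmulDl (R : realType) (V : completeNormedModType R) (mul : V -> V -> V)
  (hJB : is_JB_algebra mul) x y z : mul (x + y) z = mul x z + mul y z.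
Proof. have [hL _] := hJB. by have := hL 1 x y z; rewrite !scale1r. Qed.

Lemma jmulZl (R : realType) (V : completeNormedModType R) (mul : V -> V -> V)
  (hJB : is_JB_algebra mul) c x z : mul (c *: x) z = c *: mul x z.
Proof. have [hL _] := hJB. by have := hL c x 0 z; rewrite !addr0 jmul0l // addr0. Qed.

Lemma jmulNl (R : realType) (V : completeNormedModType R) (mul : V -> V -> V)
  (hJB : is_JB_algebra mul) x z : mul (- x) z = - mul x z.
Proof. by rewrite -scaleN1r jmulZl // scaleN1r. Qed.

Lemma jmulBl (R : realType) (V : completeNormedModType R) (mul : V -> V -> V)
  (hJB : is_JB_algebra mul) x y z : mul (x - y) z = mul x z - mul y z.
Proof. by rewrite jmulDl // jmulNl. Qed.

Lemma jmulDr (R : realType) (V : completeNormedModType R) (mul : V -> V -> V)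
  (hJB : is_JB_algebra mul) x y z : mul z (x + y) = mul z x + mul z y.
Proof. have [_ [hC _]] := hJB. by rewrite !(hC z) jmulDl. Qed.

Lemma jmulZr (R : realType) (V : completeNormedModType R) (mul : V -> V -> V)
  (hJB : is_JB_algebra mul) c x z : mul z (c *: x) = c *: mul z x.
Proof. have [_ [hC _]] := hJB. by rewrite !(hC z) jmulZl. Qed.

Lemma jmulNr (R : realType) (V : completeNormedModType R) (mul : V -> V -> V)
  (hJB : is_JB_algebra mul) x z : mul z (- x) = - mul z x.
Proof. have [_ [hC _]] := hJB. by rewrite !(hC z) jmulNl. Qed.

Lemma jmulBr (R : realType) (V : completeNormedModType R) (mul : V -> V -> V)
  (hJB : is_JB_algebra mul) x y z : mul z (x - y) = mul z x - mul z y.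
Proof. by rewrite jmulDr // jmulNr. Qed.

Lemma jmul0r (R : realType) (V : completeNormedModType R) (mul : V -> V -> V)
  (hJB : is_JB_algebra mul) z : mul z 0 = 0.
Proof. have [_ [hC _]] := hJB. by rewrite hC jmul0l. Qed.

Lemma sq0 (R : realType) (V : completeNormedModType R) (mul : V -> V -> V)
  (hJB : is_JB_algebra mul) u : mul u u = 0 -> u = 0.
Proof.
have [_ [_ [_ [_ [hN _]]]]] := hJB.
move=> H; have := hN u; rewrite H normr0 => /esym /eqP.
by rewrite expf_eq0 /= normr_eq0 => /eqP.
Qed.

Lemma fr (R : realType) (V : completeNormedModType R) (mul : V -> V -> V)
  (hJB : is_JB_algebra mul) u v : mul u u + mul v v = 0 -> u = 0.
Proof.
have [_ [_ [_ [_ [_ hN]]]]] := hJB.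
move=> H; apply: (sq0 hJB); apply/eqP; rewrite -normr_le0 -(normr0 V) -H.
exact: hN.
Qed.


Lemma apE (R : realType) (V : completeNormedModType R) (mul : V -> V -> V)
  (hJB : is_JB_algebra mul) a b (lam : R) (ha : mul a a = a)
  (hab : triple mul a b a = lam *: a) :
  mul a (mul a b) = (lam / 2) *: a + (1 / 2) *: mul a b.
Proof.
have [_ [hC _]] := hJB.
move: hab; rewrite /triple ha (hC b a) (hC (mul a b) a).
set p := mul a b; set ap := mul a p; set L := lc4 a b p ap.
have aE : a = L 1 0 0 0 by rewrite /L /lc4 scale1r !scale0r !addr0.
have pE : p = L 0 0 1 0 by rewrite /L /lc4 scale1r !scale0r !addr0 add0r.
have apE : ap = L 0 0 0 1 by rewrite /L /lc4 scale1r !scale0r !add0r.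
move=> H; rewrite apE pE aE in H *.
rewrite /L ?(lc4N, lc4D, lc4Z) in H *.
by apply: (lc4_solve (k := 2^-1) H); field.
Qed.

Lemma key (R : realType) (V : completeNormedModType R) (mul : V -> V -> V)
  (hJB : is_JB_algebra mul) a b (lam mu : R) (ha : mul a a = a) (hb : mul b b = b)
  (hab : triple mul a b a = lam *: a) (hba : triple mul b a b = mu *: b) :
  4%:R *: mul (mul a b) (mul a b) = (2 * mu) *: mul a b + lam *: a + mu *: b.
Proof.
have [hL [hC [hJ _]]] := hJB.
have Ea := apE hJB ha hab.
have Eb := apE hJB hb hba.
rewrite (hC b a) in Eb.
have J := hJ (a + b) b.
rewrite !(jmulDl hJB, jmulDr hJB) ha hb (hC b a) in J.
rewrite !(hC (mul a b) _) !hb !Eb !(jmulDr hJB, jmulZr hJB) ?hb ?(hC b a) ?Ea ?Eb in J.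
set p := mul a b in J *; set q := mul p p in J *; set L := lc4 a b p q.
have aE : a = L 1 0 0 0 by rewrite /L /lc4 scale1r !scale0r !addr0.
have bE : b = L 0 1 0 0 by rewrite /L /lc4 scale1r !scale0r !addr0 add0r.
have pE : p = L 0 0 1 0 by rewrite /L /lc4 scale1r !scale0r !addr0 !add0r.
have qE : q = L 0 0 0 1 by rewrite /L /lc4 scale1r !scale0r !add0r.
rewrite qE pE aE bE in J *.
rewrite /L ?(lc4N, lc4D, lc4Z) in J *.
by apply: (lc4_solve (k := 2) J); field.
Qed.

Ltac lcfin a b p q H k :=
  let L := fresh "L" in
  set L := lc4 a b p q;
  let aE := fresh "aE" in let bE := fresh "bE" in
  let pE := fresh "pE" in let qE := fresh "qE" in let zE := fresh "zE" in
  (have zE : 0 = L 0 0 0 0 by rewrite /L /lc4 !scale0r !addr0);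
  (have aE : a = L 1 0 0 0 by rewrite /L /lc4 scale1r !scale0r !addr0);
  (have bE : b = L 0 1 0 0 by rewrite /L /lc4 scale1r !scale0r !addr0 add0r);
  (have pE : p = L 0 0 1 0 by rewrite /L /lc4 scale1r !scale0r !addr0 !add0r);
  (have qE : q = L 0 0 0 1 by rewrite /L /lc4 scale1r !scale0r !add0r);
  let H' := fresh "H" in have H' := H;
  rewrite ?zE ?qE ?pE ?aE ?bE in H' *;
  rewrite /L ?(lc4N, lc4D, lc4Z) in H' *;
  apply: (lc4_solve (k := k) H'); field; try done.

Lemma lam_eq_mu (R : realType) (V : completeNormedModType R) (mul : V -> V -> V)
  (hJB : is_JB_algebra mul) a b (lam mu : R) (ha : mul a a = a) (hb : mul b b = b)
  (ha0 : a != 0) (hb0 : b != 0)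
  (hab : triple mul a b a = lam *: a) (hba : triple mul b a b = mu *: b) :
  lam = mu.
Proof.
have [hL [hC [hJ _]]] := hJB.
have K1 := key hJB ha hb hab hba.
have K2 := key hJB hb ha hba hab.
rewrite (hC b a) in K2.
have Ea := apE hJB ha hab.
have Eb := apE hJB hb hba.
rewrite (hC b a) in Eb.
set p := mul a b in K1 K2 Ea Eb.
set q := mul p p in K1 K2.
have E : (2 * mu) *: p + lam *: a + mu *: b = (2 * lam) *: p + mu *: b + lam *: a.
  by rewrite -K1 -K2.
have : (mu - lam) *: p = 0 by lcfin a b p q E (2^-1 : R).
move/eqP; rewrite scaler_eq0 subr_eq0 => /orP [/eqP // | /eqP p0].
move: Ea Eb; rewrite p0 !(jmul0r hJB) !scaler0 !addr0 => /esym/eqP Ea /esym/eqP Eb.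
move: Ea Eb; rewrite !scaler_eq0 (negbTE ha0) (negbTE hb0) !orbF.
by rewrite invr_eq0 (@pnatr_eq0 R 2) !orbF => /eqP -> /eqP ->.
Qed.


Ltac expand hJB := rewrite ?(jmulDl hJB, jmulDr hJB, jmulNl hJB, jmulNr hJB, jmulZl hJB, jmulZr hJB).

Unset Implicit Arguments.
Theorem proposition3p1 (R : realType) (V : completeNormedModType R)
    (mul : V -> V -> V) (hJB : is_JB_algebra mul)
    (a b : V) (lam mu : R)
    (ha : is_projection mul a) (hb : is_projection mul b)
    (ha0 : a != 0) (hb0 : b != 0)
    (hab : triple mul a b a = lam *: a) (hba : triple mul b a b = mu *: b) :
  [/\ 0 <= lam, lam = mu, mu <= 1,
      (lam = 0 <-> mul a b = 0) & (lam = 1 <-> a = b)].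
Proof.
rewrite /is_projection in ha hb.
have [hL [hC [hJ _]]] := hJB.
have lm := lam_eq_mu hJB ha hb ha0 hb0 hab hba.
subst mu.
have hq := key hJB ha hb hab hba.
have Ea := apE hJB ha hab.
have Eb := apE hJB hb hba.
rewrite (hC b a) in Eb.
have haa : triple mul a a a = a by rewrite /triple !ha subrr add0r.
have l1 : a = b -> lam = 1.
  move=> eab; move: hab; rewrite -eab haa => /eqP.
  rewrite -subr_eq0 -{1}(scale1r a) -scalerBl scaler_eq0 (negbTE ha0) orbF.
  by rewrite subr_eq0 => /eqP <-.
set p := mul a b in hq Ea Eb *.
set q := mul p p in hq.
have [y yE] : {y | y = b + lam *: a - 2 *: p} by exists (b + lam *: a - 2 *: p).
have ay : mul a y = 0.
  rewrite yE; expand hJB; rewrite ha -/p Ea.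
  lcfin a b p q hq (0:R).
have yy : mul y y = (1 - lam) *: y.
  rewrite yE; expand hJB.
  rewrite ?ha ?hb ?(hC b a) -/p ?(hC p a) ?(hC p b) ?Ea ?Eb -/q.
  lcfin a b p q hq (1:R).
have dd : mul (a - b) (a - b) = (1 - lam) *: a + y.
  rewrite yE; expand hJB.
  rewrite ?ha ?hb ?(hC b a) -/p.
  lcfin a b p q hq (0:R).
have xx : mul (2 *: (p - lam *: a)) (2 *: (p - lam *: a)) = lam *: ((1 - lam) *: a + y).
  rewrite yE; expand hJB.
  rewrite ?ha ?(hC p a) ?Ea -/q.
  lcfin a b p q hq (1:R).
have l0 : lam = 0 <-> p = 0.
  split.
    move=> l0; move: hq; rewrite l0 mulr0 !scale0r !addr0 => /eqP.
    rewrite scaler_eq0 (@pnatr_eq0 R 4) /= => /eqP q0.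
    exact: (sq0 hJB).
  move=> p0; move: Ea; rewrite p0 (jmul0r hJB) scaler0 addr0 => /esym/eqP.
  rewrite scaler_eq0 (negbTE ha0) orbF mulf_eq0 invr_eq0 (@pnatr_eq0 R 2) orbF.
  by move/eqP.
have lge0 : 0 <= lam.
  rewrite leNgt; apply/negP => hlt.
  pose s := Num.sqrt (- lam).
  have ss : s * s = - lam by rewrite /s -expr2 sqr_sqrtr // oppr_ge0 ltW.
  have : mul (s *: (a - b)) (s *: (a - b)) + mul (2 *: (p - lam *: a)) (2 *: (p - lam *: a)) = 0.
    by rewrite xx (jmulZl hJB) (jmulZr hJB) scalerA ss dd scaleNr addNr.
  move/(fr hJB)/eqP; rewrite scaler_eq0 => /orP [s0 | ab0].
    by move: s0; rewrite /s sqrtr_eq0 oppr_le0 leNgt hlt.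
  move: ab0; rewrite subr_eq0 => /eqP/l1 l1'.
  by move: hlt; rewrite l1' ltNge ler01.
have lle1 : lam <= 1.
  rewrite leNgt; apply/negP => hgt.
  have hne : 1 - lam != 0 by rewrite subr_eq0 lt_eqF.
  pose s := Num.sqrt (lam - 1).
  have ss : s * s = lam - 1 by rewrite /s -expr2 sqr_sqrtr // subr_ge0 ltW.
  have [f fE] : {f | f = a + (1 - lam)^-1 *: y} by eexists.
  have ff : mul f f = f.
    rewrite fE; expand hJB; rewrite ha ay (hC y a) ay yy !scaler0 !addr0 add0r scalerA.
    congr (_ + _); rewrite scalerA; congr (_ *: _); field; exact: hne.
  have af : mul a f = a.
    by rewrite fE; expand hJB; rewrite ha ay scaler0 addr0.
  have : mul (s *: f) (s *: f) + mul (a - b) (a - b) = 0.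
    rewrite (jmulZl hJB) (jmulZr hJB) scalerA ss ff dd fE.
    lcfin a y b p (erefl (0 : V)) (0:R); exact: hne.
  move/(fr hJB)/eqP; rewrite scaler_eq0 => /orP [s0 | /eqP f0].
    by move: s0; rewrite /s sqrtr_eq0 subr_le0 leNgt hgt.
  by move: af; rewrite f0 (jmul0r hJB) => a0; rewrite a0 eqxx in ha0.
split => //.
split => [lam1 | ]; last exact: l1.
rewrite lam1 in yy dd.
have y0 : y = 0.
  apply: (sq0 hJB); by rewrite yy subrr scale0r.
have : mul (a - b) (a - b) = 0 by rewrite dd y0 subrr scale0r addr0.
by move/(sq0 hJB)/eqP; rewrite subr_eq0 => /eqP.
Qed.
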